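(* Let $\{G_n^\circ\}_{n\ge1}$ be an $H$-linear family of graphs with spiders, and let $a_n=\Gamma_{G_n^\circ}(1)/\mathcal{E}_{G_n^\circ}(1)$. If $\lim_{n\to\infty}a_n=0$, then $$\lim_{n\to\infty}\sup_{x\in\mathbb{R}}\Big|\sum_{0\le i\le x}\frac{\varepsilon_i(G_n^\circ)}{\mathcal{E}_{G_n^\circ}(1)}-\sum_{0\le i\le x}\frac{\tilde\gamma_i(G_n^\circ)}{\tilde\Gamma_{G_n^\circ}(1)}\Big|=0;$$ in particular the limits of the crosscap-number distributions of $G_n^\circ$ are the same as those of the Euler-genus distributions.
   Context: Embeddings are cellular embeddings in closed surfaces counted via general rotation systems up to equivalence. $\gamma_k(G)$, $\tilde\gamma_j(G)$, $\varepsilon_i(G)$ denote the numbers of embeddings of $G$ into the orientable surface of genus $k$, the non-orientable surface with $j$ crosscaps, and surfaces of Euler-genus $i$ (Euler-genus $2k$ for the orientable genus-$k$ surface, $j$ for $j$ crosscaps); $\Gamma_G(x)=\sum\gamma_kx^k$, $\tilde\Gamma_G(x)=\sum\tilde\gamma_jx^j$, $\mathcal{E}_G(x)=\sum\varepsilon_ix^i$. $H$-linear family with spiders: $H$ is a connected graph with disjoint vertex sets $\{u_1,\dots,u_s\}$, $\{v_1,\dots,v_s\}$; $H_i$ copies of $H$ with $u_{i,j},v_{i,j}$ the copies of $u_j,v_j$; $G_1=H_1$ and $G_n$ is obtained from $G_{n-1}$ and $H_n$ by identifying $v_{n-1,j}$ with $u_{n,j}$ for all $j$; $G_n^\circ$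 is obtained from $G_n$ by attaching fixed rooted graphs (spiders) at some of the vertices $u_{1,i}$ and $v_{n,i}$ by identifying them with root vertices of the spiders. *)

(* Defs.v *)
From HB Require Import structures.
From mathcomp Require Import all_boot all_order all_algebra fingroup perm.
From mathcomp Require Import all_classical all_reals all_analysis.

Set Implicit Arguments.
Unset Strict Implicit.
Unset Printing Implicit Defensive.

Import Order.TTheory GRing.Theory Num.Theory.

(* General (multi)graphs: finite vertex type, finite edge type, and    *)
(* for each edge its (ordered) pair of endpoints; loops and parallel   *)
(* edges are allowed.                                                  *)
Record graph := Graph {
  gV : finType;
  gEd : finType;
  gend : gEd -> gV * gV }.

Definition gadj (G : graph) : rel (gV G) :=
  fun x y => [exists e : gEd G, (gend e == (x, y)) || (gend e == (y, x))].

Definition gconnected (G : graph) : Prop :=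
  forall x y : gV G, connect (@gadj G) x y.

Section Embeddings.
Variable G : graph.

(* darts = half-edges: (e, false) is the end at (gend e).1,
   (e, true) the end at (gend e).2 *)
Definition dart := (gEd G * bool)%type.
Definition dv (d : dart) : gV G := if d.2 then (gend d.1).2 else (gend d.1).1.
Definition dalpha (d : dart) : dart := (d.1, ~~ d.2).

(* a general rotation system: a permutation of darts whose cycles are
   exactly the local rotations at the vertices, plus an edge signature
   (true = twisted edge) *)
Definition rsys := prod {perm dart} {ffun gEd G -> bool}.

Definition valid_rs (r : rsys) : bool :=
  [forall d, dv (r.1 d) == dv d] &&
  [forall d, [forall d', (dv d == dv d') ==> fconnect (fun x => r.1 x) d d']].

(* flags (d, s): dart d, side s (true = the side between d and r.1 d) *)
Definition flag := (dart * bool)%type.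
Definition tau0 (r : rsys) (f : flag) : flag :=
  (dalpha f.1, if r.2 f.1.1 then f.2 else ~~ f.2).
Definition tau1 (f : flag) : flag := (f.1, ~~ f.2).
Definition tau2 (r : rsys) (f : flag) : flag :=
  if f.2 then (r.1 f.1, false) else ((r.1^-1)%g f.1, true).

Definition face_rel (r : rsys) : rel flag :=
  fun f g => (g == tau0 r f) || (g == tau2 r f).
Definition nfaces (r : rsys) : nat := n_comp (face_rel r) predT.

Definition euler_genus (r : rsys) : nat :=
  (2 + #|gEd G|) - (#|gV G| + nfaces r).

(* orientable surface iff the flag graph is bipartite *)
Definition orientable (r : rsys) : bool :=
  [exists c : {ffun flag -> bool}, [forall f,
     [&& c (tau0 r f) != c f, c (tau1 f) != c f & c (tau2 r f) != c f]]].

Definition switch_rel (S : {set gV G}) (r r' : rsys) : bool :=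
  [forall d, r'.1 d == (if dv d \in S then (r.1^-1)%g d else r.1 d)] &&
  [forall e, r'.2 e == r.2 e (+) (((gend e).1 \in S) != ((gend e).2 \in S))].
Definition rs_equiv (r r' : rsys) : bool := [exists S, switch_rel S r r'].

Definition num_emb (P : pred rsys) : nat :=
  #|[set [set y | valid_rs y && rs_equiv x y] | x in [pred x | valid_rs x && P x]]|.

Definition eps_ (i : nat) : nat := num_emb (fun r => euler_genus r == i).
Definition gam (k : nat) : nat :=
  num_emb (fun r => orientable r && (euler_genus r == k.*2)).
Definition gamt (j : nat) : nat :=
  num_emb (fun r => ~~ orientable r && (euler_genus r == j)).

(* all genera / Euler genera are < gbound, so these are the values at 1
   of the generating polynomials *)
Definition gbound : nat := #|gEd G| + 2.
Definition Eps1 : nat := \sum_(i < gbound) eps_ i.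
Definition Gamma1 : nat := \sum_(k < gbound) gam k.
Definition Gammat1 : nat := \sum_(j < gbound) gamt j.

End Embeddings.

Section Quotient.
Variables (G : graph) (R : rel (gV G)).
Definition qrel : rel (gV G) := fun x y => R x y || R y x.
Definition qcls (x : gV G) : {set gV G} := [set y | connect qrel x y].
Definition qV := {A : {set gV G} | [exists x, A == qcls x]}.
Lemma qcls_ok x : [exists y, qcls x == qcls y].
Proof. by apply/existsP; exists x. Qed.
Definition qproj (x : gV G) : qV := exist _ (qcls x) (qcls_ok x).
Definition quot : graph :=
  @Graph _ (gEd G) (fun e => (qproj (gend e).1, qproj (gend e).2)).
End Quotient.

(* H-linear family with spiders.  Lin_spider ... n is G^o_{n+1}:       *)
(* n+1 copies H_0..H_n of H, v_{j,i} identified with u_{j+1,i}, and     *)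
(* the root of spider (i,false) identified with u_{0,i}, the root of    *)
(* spider (i,true) identified with v_{n,i}.                             *)
Section Linear.
Variables (H : graph) (s : nat) (u v : 'I_s -> gV H)
          (sp : 'I_s * bool -> graph) (sr : forall k, gV (sp k)) (n : nat).

Definition cpV := ('I_n.+1 * gV H)%type.
Definition uV := (cpV + {k : 'I_s * bool & gV (sp k)})%type.
Definition uE := (('I_n.+1 * gEd H) + {k : 'I_s * bool & gEd (sp k)})%type.

Definition uend (e : uE) : uV * uV :=
  match e with
  | inl (j, e0) => (inl (j, (gend e0).1), inl (j, (gend e0).2))
  | inr (existT k e0) =>
      (inr (existT _ k (gend e0).1), inr (existT _ k (gend e0).2))
  end.

Definition apt (k : 'I_s * bool) : cpV :=
  if k.2 then (ord_max, v k.1) else (ord0, u k.1).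

Definition ident : rel uV := fun x y =>
  match x, y with
  | inl (j1, w1), inl (j2, w2) =>
      [exists i, [&& w1 == u i, w2 == v i & (j1 : nat) == j2.+1]]
  | inr (existT k r), inl p => (r == sr k) && (p == apt k)
  | _, _ => false
  end.

Definition union_graph : graph := @Graph uV uE uend.
Definition Lin_spider : graph := @quot union_graph ident.
End Linear.

Local Open Scope ring_scope.
Definition cdf_eg (R : realType) (G : graph) (x : R) : R :=
  \sum_(i < gbound G | (i : nat)%:R <= x) ((eps_ G i)%:R / (Eps1 G)%:R).
Definition cdf_cc (R : realType) (G : graph) (x : R) : R :=
  \sum_(i < gbound G | (i : nat)%:R <= x) ((gamt G i)%:R / (Gammat1 G)%:R).

(* Main.v *)
Require Import Defs.
From HB Require Import structures.
From mathcomp Require Import all_boot all_order all_algebra.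
From mathcomp Require Import all_classical all_reals all_analysis.
From mathcomp Require Import fingroup perm ring lra zify.
Import Order.TTheory GRing.Theory Num.Theory.
Set Implicit Arguments.
Unset Strict Implicit.
Unset Printing Implicit Defensive.
Lemma card_imset_ker (T A B : finType) (g : T -> A) (h : T -> B) :
  (forall x y, (g x == g y) = (h x == h y)) ->
  #|[set g x | x : T]| = #|[set h x | x : T]|.
Proof.
move=> K.
set S := [set (g x, h x) | x : T].
have E1 : [set g x | x : T] = fst @: S by rewrite -imset_comp.
have E2 : [set h x | x : T] = snd @: S by rewrite -imset_comp.
have I1 : {in S &, injective fst}.
  move=> p q /imsetP[x _ ->] /imsetP[y _ ->] /= E.
  by have /eqP := E; rewrite K => /eqP ->; rewrite E.
have I2 : {in S &, injective snd}.
  move=> p q /imsetP[x _ ->] /imsetP[y _ ->] /= E.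
  by have /eqP := E; rewrite -K => /eqP ->; rewrite E.
by rewrite E1 E2 (card_in_imset I1) (card_in_imset I2).
Qed.

Section NumEmb.
Variable G : graph.

Lemma num_emb_mono (P Q : pred (rsys G)) :
  (forall x, valid_rs x -> P x -> Q x) -> (num_emb P <= num_emb Q)%N.
Proof.
move=> PQ; rewrite /num_emb; apply: subset_leq_card; apply/fintype.subsetP=> A.
case/imsetP=> x; rewrite inE => /andP[vx Px] ->.
by apply/imsetP; exists x => //; rewrite inE vx PQ.
Qed.

Lemma num_emb_ext (P Q : pred (rsys G)) :
  (forall x, valid_rs x -> P x = Q x) -> num_emb P = num_emb Q.
Proof.
move=> PQ; apply/eqP; rewrite eqn_leq !num_emb_mono // => x vx.
- by rewrite PQ.
- by rewrite PQ.
Qed.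

Lemma num_emb_or (P Q : pred (rsys G)) :
  (num_emb (fun x => P x || Q x) <= num_emb P + num_emb Q)%N.
Proof.
rewrite /num_emb; set f := fun x => _.
apply: leq_trans (leq_card_setU _ _); apply: subset_leq_card; apply/fintype.subsetP=> A.
case/imsetP=> x; rewrite inE => /andP[vx /orP[Px|Qx]] ->; rewrite inE.
- by apply/orP; left; apply/imsetP; exists x => //; rewrite inE vx Px.
- by apply/orP; right; apply/imsetP; exists x => //; rewrite inE vx Qx.
Qed.

Lemma num_emb0 (P : pred (rsys G)) :
  (forall x, valid_rs x -> ~~ P x) -> num_emb P = 0%N.
Proof.
move=> nP; rewrite /num_emb; apply/eqP; rewrite cards_eq0; apply/eqP.
apply/setP=> A; rewrite inE; apply/negP => /imsetP[x]; rewrite inE.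
by case/andP=> vx Px; move: (nP x vx); rewrite Px.
Qed.

End NumEmb.
Section Parity.
Variable G : graph.
Variable r : rsys G.
Hypothesis vr : valid_rs r.
Variable c : {ffun flag G -> bool}.
Hypothesis hc : forall f, [&& c (tau0 r f) != c f, c (tau1 f) != c f & c (tau2 r f) != c f].

Lemma c0 f : c (tau0 r f) = ~~ c f.
Proof. by case/and3P: (hc f); case: (c (tau0 r f)); case: (c f). Qed.
Lemma c1 f : c (tau1 f) = ~~ c f.
Proof. by case/and3P: (hc f); case: (c (tau1 f)); case: (c f). Qed.
Lemma c2 f : c (tau2 r f) = ~~ c f.
Proof. by case/and3P: (hc f); case: (c (tau2 r f)); case: (c f). Qed.

Lemma tau0K : involutive (tau0 r).
Proof. by case=> [[e b] s]; rewrite /tau0 /dalpha /= negbK; case: (r.2 e) => //=; rewrite negbK. Qed.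
Lemma tau1K : involutive (@tau1 G).
Proof. by case=> d s; rewrite /tau1 /= negbK. Qed.
Lemma tau2K : involutive (tau2 r).
Proof. by case=> d [] /=; rewrite /tau2 /= ?permK ?permKV. Qed.

Definition kc (d : dart G) : flag G := (d, c (d, true)).
Lemma c_kc d : c (kc d).
Proof.
rewrite /kc; case E: (c (d, true)) => //.
by have := c1 (d, true); rewrite /tau1 /= E.
Qed.
Lemma kc_eq f : c f -> kc f.1 = f.
Proof.
case: f => d [] cf; rewrite /kc /= ?cf //.
by have := c1 (d, false); rewrite /tau1 /= cf => ->.
Qed.

Definition lift (T : flag G -> flag G) d := (T (kc d)).1.
Lemma kc_lift T : (forall f, c (T f) = c f) -> forall d, kc (lift T d) = T (kc d).
Proof. by move=> cT d; rewrite /lift kc_eq // cT c_kc. Qed.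
Lemma lift_inj T : (forall f, c (T f) = c f) -> injective T -> injective (lift T).
Proof.
move=> cT iT d d' E.
have : kc (lift T d) = kc (lift T d') by rewrite E.
by rewrite !kc_lift // => /iT/(congr1 fst).
Qed.

Definition T1 f := tau2 r (tau1 f).
Definition T2 f := tau0 r (tau1 f).
Definition T3 f := tau2 r (tau0 r f).
Lemma cT1 f : c (T1 f) = c f. Proof. by rewrite /T1 c2 c1 negbK. Qed.
Lemma cT2 f : c (T2 f) = c f. Proof. by rewrite /T2 c0 c1 negbK. Qed.
Lemma cT3 f : c (T3 f) = c f. Proof. by rewrite /T3 c2 c0 negbK. Qed.
Lemma iT1 : injective T1. Proof. by apply: (can_inj (g := fun f => tau1 (tau2 r f))) => f; rewrite /T1 tau2K tau1K. Qed.
Lemma iT2 : injective T2. Proof. by apply: (can_inj (g := fun f => tau1 (tau0 r f))) => f; rewrite /T2 tau0K tau1K. Qed.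
Lemma iT3 : injective T3. Proof. by apply: (can_inj (g := fun f => tau0 r (tau2 r f))) => f; rewrite /T3 tau2K tau0K. Qed.

Definition rho : {perm dart G} := perm (lift_inj cT1 iT1).
Definition bet : {perm dart G} := perm (lift_inj cT2 iT2).
Definition phi : {perm dart G} := perm (lift_inj cT3 iT3).

Lemma rho_bet_phi : rho = (bet * phi)%g.
Proof.
apply/permP=> d; rewrite permM !permE.
apply: (congr1 fst (x := kc (lift T1 d)) (y := kc (lift T3 (lift T2 d)))).
rewrite !kc_lift; [|exact: cT2|exact: cT3|exact: cT1]. by rewrite /T3 /T2 /T1; congr (tau2 r _); rewrite (tau0K (tau1 (kc d))). 
Qed.

Lemma odd_rho : odd_perm rho = odd_perm bet (+) odd_perm phi.
Proof. by rewrite rho_bet_phi odd_permM. Qed.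


Lemma odd_perm_porbits (p : {perm dart G}) : odd_perm p = odd #|porbits p|.
Proof.
rewrite /odd_perm.
have E : #|{: gEd G * bool}| = (#|gEd G| * 2)%N by rewrite card_prod card_bool.
by rewrite [X in odd X](_ : _ = (#|gEd G| * 2)%N) ?oddM ?andbF.
Qed.

Lemma bet_eq d : bet d = dalpha d.
Proof. by rewrite permE. Qed.

Lemma card_bet : #|porbits bet| = #|gEd G|.
Proof.
rewrite /porbits.
have K : forall x y : dart G, (porbit bet x == porbit bet y) = (x.1 == y.1).
  move=> x y; rewrite eq_porbit_mem; apply/porbitP/eqP.
  - case=> i ->; rewrite permX; elim: i => //= i IH; by rewrite bet_eq -IH.
  - case: x y => [e b] [e' b'] /= <-; case E: (b == b').
    + by exists 0%N; rewrite expg0 perm1; move/eqP: E => ->.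
    + exists 1%N; rewrite expg1 bet_eq /dalpha /=; congr (_, _).
      by case: b b' E => [] [].
rewrite (card_imset_ker K) -cardsT; apply: eq_card => e.
by rewrite inE; apply/imsetP; exists (e, false).
Qed.

Lemma rho_eq d : rho d = if c (d, true) then (r.1^-1)%g d else r.1 d.
Proof. by rewrite permE /lift /T1 /kc /tau1 /tau2 /=; case: (c (d, true)). Qed.

Lemma h_rho d : c (rho d, true) = c (d, true).
Proof.
rewrite permE; have := congr1 snd (kc_lift cT1 d); rewrite /kc /T1 /tau1 /tau2 /=.
by case: (c (d, true)).
Qed.

Lemma dv_r d : dv (r.1 d) = dv d.
Proof. by case/andP: vr => /forallP H _; apply/eqP; apply: H. Qed.
Lemma dv_rV d : dv ((r.1^-1)%g d) = dv d.
Proof. by rewrite -{2}(permKV r.1 d) dv_r. Qed.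
Lemma dv_rho d : dv (rho d) = dv d.
Proof. by rewrite rho_eq; case: (c (d, true)); rewrite ?dv_r ?dv_rV. Qed.

Hypothesis nis : forall x : gV G, exists d : dart G, dv d = x.

Lemma card_rho : #|porbits rho| = #|gV G|.
Proof.
rewrite /porbits.
have K : forall x y : dart G, (porbit rho x == porbit rho y) = (dv x == dv y).
  move=> x y; rewrite eq_porbit_mem; apply/idP/eqP.
  - case/porbitP=> i ->; rewrite permX; elim: i => //= i IH; by rewrite dv_rho IH.
  - move=> E.
    have F : fconnect (fun z => r.1 z) y x.
      case/andP: vr => _ /forallP/(_ y)/forallP/(_ x)/implyP; apply.
      by rewrite E.
    have Hx := iter_findex F.
    set q := if c (y, true) then (r.1^-1)%g else r.1.
    have Hq : x \in porbit q y.
      rewrite /q; case: (c (y, true)); rewrite ?porbitV;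
      by apply/porbitP; exists (findex (fun z => r.1 z) y x); rewrite permX Hx.
    case/porbitP: Hq => m ->; apply/porbitP; exists m; rewrite !permX.
    suff : iter m rho y = iter m q y /\ c (iter m rho y, true) = c (y, true) by case.
    elim: m => [|m [IH1 IH2]] //=.
    by rewrite h_rho IH2 rho_eq IH2 IH1 /q; split => //; case: (c (y, true)).
rewrite (card_imset_ker K) -cardsT; apply: eq_card => x.
rewrite inE; apply/imsetP; case: (nis x) => d <-; by exists d.
Qed.

Lemma face_sym : symmetric (face_rel r).
Proof.
move=> x y; rewrite /face_rel.
have E0 : (y == tau0 r x) = (x == tau0 r y).
  by apply/eqP/eqP => ->; rewrite tau0K.
have E2 : (y == tau2 r x) = (x == tau2 r y).
  by apply/eqP/eqP => ->; rewrite tau2K.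
by rewrite E0 E2.
Qed.
Definition csym := sym_connect_sym face_sym.

Lemma phi_kc z : kc (phi z) = tau2 r (tau0 r (kc z)).
Proof. by rewrite permE kc_lift //; exact: cT3. Qed.

Lemma memF a z : z \in porbit phi a -> phi z \in porbit phi a.
Proof.
move=> H; have <- : porbit phi z = porbit phi a by apply/eqP; rewrite eq_porbit_mem.
by have := mem_porbit phi 1 z; rewrite expg1.
Qed.
Lemma memV a z : z \in porbit phi a -> (phi^-1)%g z \in porbit phi a.
Proof.
move=> H; have <- : porbit phi z = porbit phi a by apply/eqP; rewrite eq_porbit_mem.
by have := mem_porbit (phi^-1)%g 1 z; rewrite expg1 porbitV.
Qed.

Arguments tau0 : simpl never.
Arguments tau2 : simpl never.
Arguments kc : simpl never.

Lemma conn_iff a b : connect (face_rel r) (kc a) (kc b) = (b \in porbit phi a).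
Proof.
apply/idP/idP.
- move=> C.
  pose inv := [pred g : flag G | (if c g then g else tau0 r g).1 \in porbit phi a].
  have cl : fingraph.closed (face_rel r) inv.
    apply: (intro_closed csym) => g g' /orP[/eqP->|/eqP->]; rewrite !inE.
    + by rewrite c0; case: (c g); rewrite ?tau0K; exact: id.
    + rewrite c2; case E: (c g) => H.
      * have Eg : g = kc g.1 by rewrite kc_eq.
        have Ew : kc g.1 = tau2 r (tau0 r (kc ((phi^-1)%g g.1))).
          by rewrite -phi_kc permKV.
        rewrite Eg Ew tau2K tau0K; exact: memV H.
      * have Eg : tau0 r g = kc (tau0 r g).1 by rewrite kc_eq // c0 E.
        have -> : tau2 r g = kc (phi (tau0 r g).1).
          by rewrite phi_kc -Eg tau0K.
        exact: memF H.
  have := closed_connect cl C; rewrite !inE !c_kc /= porbit_id => /esym ->.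
  done.
- case/porbitP => i ->; elim: i => [|i IH]; first by rewrite expg0 perm1 connect0.
  rewrite expgSr permM; apply: connect_trans IH _; rewrite phi_kc.
  apply: (connect_trans (y := tau0 r (kc ((phi ^+ i)%g a)))); apply: connect1;
  by rewrite /face_rel eqxx ?orbT.
Qed.

Lemma card_phi : nfaces r = #|porbits phi|.
Proof.
rewrite /nfaces /n_comp_mem.
have -> : #|predI (roots (face_rel r)) (mem predT)| = #|[set fingraph.root (face_rel r) f | f : flag G]|.
  apply: eq_card => f; rewrite !inE andbT; apply/idP/imsetP.
  - by move/eqP=> <-; exists f.
  - by case=> g _ ->; rewrite /roots /= (root_root csym).
have -> : [set fingraph.root (face_rel r) f | f : flag G] = [set fingraph.root (face_rel r) (kc d) | d : dart G].
  apply/setP=> g; apply/imsetP/imsetP => [[f _ ->]|[d _ ->]]; last by exists (kc d).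
  case E: (c f).
  - by exists f.1 => //; rewrite kc_eq.
  - exists (tau0 r f).1 => //; rewrite kc_eq ?c0 ?E //.
    apply/eqP; rewrite (root_connect csym); apply: connect1; by rewrite /face_rel eqxx.
rewrite /porbits; apply: card_imset_ker => x y.
by rewrite (root_connect csym) csym conn_iff eq_porbit_mem.
Qed.

Lemma parity_VEF : odd #|gV G| = odd #|gEd G| (+) odd (nfaces r).
Proof. by rewrite -card_rho -card_bet card_phi -!odd_perm_porbits odd_rho. Qed.

Lemma eg_even : ~~ odd (euler_genus r).
Proof.
rewrite /euler_genus; case: (leqP (#|gV G| + nfaces r) (2 + #|gEd G|)) => H.
- by rewrite oddB // !oddD parity_VEF /=; case: (odd #|gEd G|); case: (odd (nfaces r)).
- by move/ltnW: H; rewrite -subn_eq0 => /eqP ->.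
Qed.

End Parity.

Lemma incident_of_connect (K : graph) (w w' : gV K) :
  w != w' -> connect (@gadj K) w w' -> exists e, ((gend e).1 == w) || ((gend e).2 == w).
Proof.
move=> ne /connectP[[|y0 p] /= P E]; first by rewrite E eqxx in ne.
case/andP: P => /existsP[e /orP[/eqP He|/eqP He]] _; exists e; by rewrite He eqxx ?orbT.
Qed.

Section LinNis.
Variables (H : graph) (s : nat) (u v : 'I_s -> gV H)
          (sp : 'I_s * bool -> graph) (sr : forall k, gV (sp k)) (n : nat).
Hypothesis s0 : (0 < s)%N.
Hypothesis cH : gconnected H.
Hypothesis uv : forall i j, u i != v j.
Hypothesis cS : forall k, gconnected (sp k).

Let UG := union_graph H sp n.
Let I := @ident H s u v sp sr n.

Lemma inl_edge (p : cpV H n) : exists e : gEd UG,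
  ((gend e).1 == (inl p : gV UG)) || ((gend e).2 == (inl p : gV UG)).
Proof.
case: p => j w.
pose w0 : 'I_s := Ordinal s0.
pose w' := if w == u w0 then v w0 else u w0.
have ne : w != w'.
  rewrite /w'; case E: (w == u w0); first by rewrite (eqP E) uv.
  by rewrite E.
have [e0 He0] := incident_of_connect ne (cH w w').
exists (inl (j, e0)); rewrite /= /uend /=.
by case/orP: He0 => /eqP ->; rewrite eqxx ?orbT.
Qed.

Lemma qrel_sym : symmetric (@qrel UG I).
Proof. by move=> x y; rewrite /qrel orbC. Qed.

Lemma ex_edge (x : gV UG) : exists y, exists e : gEd UG,
  connect (@qrel UG I) x y /\ (((gend e).1 == y) || ((gend e).2 == y)).
Proof.
case: x => [p|[k r0]].
- by have [e He] := inl_edge p; exists (inl p), e; split.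
- case E: (r0 == sr k).
  + have [e He] := inl_edge (apt u v n k).
    exists (inl (apt u v n k)), e; split => //.
    apply: connect1; by rewrite /qrel /= E eqxx.
  + have [e0 He0] := incident_of_connect (negbT E) (cS r0 (sr k)).
    exists (inr (existT _ k r0)), (inr (existT _ k e0)); split => //.
    by rewrite /= /uend /=; case/orP: He0 => /eqP ->; rewrite eqxx ?orbT.
Qed.

Lemma Lin_nis : forall x : gV (Lin_spider u v sr n), exists d : dart (Lin_spider u v sr n), dv d = x.
Proof.
case=> A HA; have [x /eqP Ax] := existsP HA.
have [y [e [Cxy He]]] := ex_edge x.
have Q : @qproj UG I y = exist _ A HA.
  apply: val_inj => /=; rewrite Ax /qcls; apply/setP => z; rewrite !inE.
  by rewrite (same_connect (sym_connect_sym qrel_sym) Cxy).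
case/orP: He => /eqP Hy.
- by exists (e, false); rewrite /dv /= Hy.
- by exists (e, true); rewrite /dv /= Hy.
Qed.

End LinNis.

Section Counts.
Variable G : graph.
Hypothesis nis : forall x : gV G, exists d : dart G, dv d = x.

Lemma orient_even (r : rsys G) : valid_rs r -> orientable r -> ~~ odd (euler_genus r).
Proof. move=> vr /existsP[c /forallP hc]; exact: (eg_even vr hc nis). Qed.

Lemma gamt_le i : (gamt G i <= eps_ G i)%N.
Proof. by apply: num_emb_mono => x _ /andP[_ ->]. Qed.

Definition geven i := if odd i then 0%N else gam G i./2.

Lemma eps_le i : (eps_ G i <= gamt G i + geven i)%N.
Proof.
rewrite /eps_ (@num_emb_ext _ _ (fun r : rsys G => (orientable r && (euler_genus r == i)) || (~~ orientable r && (euler_genus r == i)))); last by move=> x _; case: (orientable x); rewrite /= ?orbF.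
rewrite addnC; have h := num_emb_or (fun r : rsys G => orientable r && (euler_genus r == i)) (fun r : rsys G => ~~ orientable r && (euler_genus r == i)).
apply: (leq_trans h); rewrite leq_add2r /geven.
case O: (odd i).
- rewrite num_emb0 // => x vx; apply/andP => -[ox /eqP E].
  by have := orient_even vx ox; rewrite E O.
- rewrite /gam; apply: num_emb_mono => x _ /andP[-> /eqP ->].
  by rewrite /= -{1}(odd_double_half i) O.
Qed.

Lemma sum_geven n : (\sum_(i < n) geven i <= \sum_(k < n) gam G k)%N.
Proof.
have E : forall m, \sum_(i < m.*2) geven i = \sum_(k < m) gam G k.
  elim=> [|m IH]; first by rewrite !big_ord0.
  rewrite doubleS !big_ord_recr /= IH /geven odd_double /= doubleK.
  by rewrite odd_double /= addn0.
rewrite -E -!(big_mkord xpredT).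
rewrite [X in (_ <= X)%N](big_cat_nat (n := n)) //=; first exact: leq_addr.
by rewrite -addnn leq_addr.
Qed.

Lemma partial_lo (P : pred 'I_(gbound G)) :
  (\sum_(i < gbound G | P i) gamt G i <= \sum_(i < gbound G | P i) eps_ G i)%N.
Proof. by apply: leq_sum => i _; exact: gamt_le. Qed.

Lemma partial_hi (P : pred 'I_(gbound G)) :
  (\sum_(i < gbound G | P i) eps_ G i <= \sum_(i < gbound G | P i) gamt G i + Gamma1 G)%N.
Proof.
apply: (@leq_trans (\sum_(i < gbound G | P i) (gamt G i + geven i))).
  by apply: leq_sum => i _; exact: eps_le.
rewrite big_split /= leq_add2l /Gamma1; apply: (leq_trans _ (sum_geven _)).
by rewrite [X in (_ <= X)%N](bigID P) /= leq_addr.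
Qed.

Lemma partial_tot (P : pred 'I_(gbound G)) :
  (\sum_(i < gbound G | P i) gamt G i <= Gammat1 G)%N.
Proof. by rewrite /Gammat1 [X in (_ <= X)%N](bigID P) /= leq_addr. Qed.

Lemma tot_lo : (Gammat1 G <= Eps1 G)%N.
Proof. by apply: leq_sum => i _; exact: gamt_le. Qed.

Lemma tot_hi : (Eps1 G <= Gammat1 G + Gamma1 G)%N.
Proof.
have := partial_hi xpredT.
by rewrite /Eps1 /Gammat1.
Qed.

End Counts.

Local Open Scope ring_scope.
Lemma key_bound (R : realFieldType) (A B E T Gm : nat) :
  (B <= A)%N -> (A <= B + Gm)%N -> (B <= T)%N -> (T <= E)%N -> (E <= T + Gm)%N ->
  `|A%:R / E%:R - B%:R / T%:R| <= 2 * (Gm%:R / E%:R) :> R.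
Proof.
move=> h1 h2 h3 h4 h5.
case: (posnP E) => [E0|Ep].
  have T0 : T = 0%N by apply/eqP; rewrite -leqn0 -E0.
  have B0 : B = 0%N by apply/eqP; rewrite -leqn0 -T0.
  by rewrite E0 T0 B0 !invr0 !mulr0 subr0 normr0.
have gE : 0 <= (Gm%:R : R) / E%:R by rewrite divr_ge0 ?ler0n.
case: (posnP T) => [T0|Tp].
  have B0 : B = 0%N by apply/eqP; rewrite -leqn0 -T0.
  rewrite T0 B0 invr0 mulr0 subr0 ger0_norm ?divr_ge0 ?ler0n //.
  have : (A%:R : R) / E%:R <= Gm%:R / E%:R.
    by rewrite ler_pM2r ?invr_gt0 ?ltr0n // ler_nat -(add0n Gm) -B0.
  lra.
have H1 : (A * T <= B * E + Gm * T)%N by nia.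
have H2 : (B * E <= A * T + Gm * T)%N by nia.
have R1 : (A%:R * T%:R <= B%:R * E%:R + Gm%:R * T%:R :> R).
  by rewrite -!natrM -natrD ler_nat.
have R2 : (B%:R * E%:R <= A%:R * T%:R + Gm%:R * T%:R :> R).
  by rewrite -!natrM -natrD ler_nat.
have eP : (0 : R) < E%:R by rewrite ltr0n.
have tP : (0 : R) < T%:R by rewrite ltr0n.
have gt : (0 : R) <= Gm%:R * T%:R by rewrite -natrM ler0n.
have -> : (A%:R : R) / E%:R - B%:R / T%:R = (A%:R * T%:R - B%:R * E%:R) / (E%:R * T%:R).
  by field; rewrite ?lt0r_neq0.
have etP : (0 : R) < E%:R * T%:R by rewrite mulr_gt0.
rewrite normrM (gtr0_norm (x := (E%:R * T%:R)^-1)) ?invr_gt0 //.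
rewrite ler_pdivrMr //.
have -> : 2 * ((Gm%:R : R) / E%:R) * (E%:R * T%:R) = 2 * (Gm%:R * T%:R).
  by field; rewrite lt0r_neq0.
rewrite ler_norml; apply/andP; split; lra.
Qed.

Local Open Scope classical_set_scope.
Local Open Scope ring_scope.

Theorem mainTheorem4 (R : realType) (H : graph) (s : nat) (u v : 'I_s -> gV H)
  (sp : 'I_s * bool -> graph) (sr : forall k, gV (sp k)) :
  (0 < s)%N -> gconnected H -> injective u -> injective v ->
  (forall i j, u i != v j) -> (forall k, gconnected (sp k)) ->
  (fun n => (Gamma1 (Lin_spider u v sr n))%:R / (Eps1 (Lin_spider u v sr n))%:R : R)
     @ \oo --> 0 ->
  (fun n => sup [set `| cdf_eg (Lin_spider u v sr n) x - cdf_cc (Lin_spider u v sr n) x |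
                 | x in [set: R]]) @ \oo --> 0.
Proof.
move=> s0 cH iu iv uv cS Ha.
pose a n := (Gamma1 (Lin_spider u v sr n))%:R / (Eps1 (Lin_spider u v sr n))%:R : R.
have bnd : forall n x, `|cdf_eg (Lin_spider u v sr n) x - cdf_cc (Lin_spider u v sr n) x| <= 2 * a n.
  move=> n x.
  have nis : forall y : gV (Lin_spider u v sr n), exists d : dart _, dv d = y.
    by apply: Lin_nis.
  rewrite /cdf_eg /cdf_cc -!mulr_suml -!natr_sum /a.
  apply: key_bound.
  - exact: partial_lo.
  - exact: (partial_hi nis).
  - exact: partial_tot.
  - exact: tot_lo.
  - exact: (tot_hi nis).
have ne : forall n, [set `| cdf_eg (Lin_spider u v sr n) x - cdf_cc (Lin_spider u v sr n) x |
                 | x in [set: R]] !=set0.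
  by move=> n; exists `| cdf_eg (Lin_spider u v sr n) 0 - cdf_cc (Lin_spider u v sr n) 0 |, 0.
have H0 : (fun _ : nat => 0 : R) @ \oo --> 0.
  by apply/cvgrPdist_lt => e e0; apply: nearW => n; rewrite subrr normr0.
have H2 : (fun n => 2 * a n : R) @ \oo --> 0.
  rewrite -(mulr0 2); apply: cvgMl_tmp; exact: Ha.
apply: (squeeze_cvgr _ H0 H2).
apply: nearW => n; apply/andP; split.
- have [y [x _ _]] := ne n.
  apply: (le_trans (normr_ge0 (cdf_eg (Lin_spider u v sr n) x - cdf_cc (Lin_spider u v sr n) x))).
  apply: ub_le_sup; last by exists x.
  by exists (2 * a n) => z [w _ <-]; exact: bnd.
- by apply: ge_sup => // z [w _ <-]; exact: bnd.
Qed.
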